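(* Let $\xi\in\mathbb{S}^{N-1}$ and $\xi^\perp=I-\xi\otimes\xi$. (i) For $v\in\mathbb{R}^N$: $\xi\vee v\le0$ if and only if ($v=(\xi^\top v)\xi$ and $\xi^\top v\le0$), if and only if ($\xi^\perp v=0$ and $\xi^\top v\le0$), if and only if $v=-|v|\xi$. (ii) For $\mathbf{X}\in\mathbb{R}^N\otimes\mathbb{R}^{n\times n}_s$: $\xi\vee\mathbf{X}\le_\otimes0$ if and only if ($\mathbf{X}=\xi\otimes(\xi^\top\mathbf{X})$ and $\xi^\top\mathbf{X}\le0$), if and only if ($\xi^\perp\mathbf{X}=0$ and $\xi^\top\mathbf{X}\le0$), if and only if $\xi\vee\mathbf{X}\le0$. In particular, for every $\eta\in\mathbb{R}^N$ and $\mathbf{Y}\in\mathbb{R}^N\otimes\mathbb{R}^{n\times n}_s$, $\eta\vee\mathbf{Y}\le_\otimes0$ if and only if $\eta\vee\mathbf{Y}\le0$.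
   Context: Summation over repeated indices. For $a,b\in\mathbb{R}^N$, $a\vee b:=\frac12(a\otimes b+b\otimes a)\in\mathbb{R}^{N\times N}_s$, with inequalities of symmetric matrices in the sense of quadratic forms. $\mathbb{R}^N\otimes\mathbb{R}^{n\times n}_s$: arrays $\mathbf{X}=(\mathbf{X}_{\alpha ij})$ symmetric in $i,j$. $\xi^\top\mathbf{X}:=(\xi_\alpha\mathbf{X}_{\alpha ij})\in\mathbb{R}^{n\times n}_s$ (with $\le0$ meaning negative semidefinite), $\xi^\perp\mathbf{X}:=((\xi^\perp)_{\alpha\beta}\mathbf{X}_{\beta ij})$, $\xi\otimes A:=(\xi_\alpha A_{ij})$. $\xi\vee\mathbf{X}$ is the fourth-order tensor with components $\frac12(\xi_\alpha\mathbf{X}_{\beta ij}+\xi_\beta\mathbf{X}_{\alpha ij})$ indexed by $(\alpha i,\beta j)$. For a fourth-order tensor $\Xi$: $\Xi\le0$ means $\Xi_{\alpha i\beta j}P_{\alpha i}P_{\beta j}\le0$ for all $P\in\mathbb{R}^{N\times n}$; $\Xi\le_\otimes0$ means $\Xi_{\alpha i\beta j}\eta_\alpha w_i\eta_\beta w_j\le0$ for all $\eta\in\mathbb{R}^N,w\in\mathbb{R}^n$. *)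

(* Defs.v *)
(* R : rcfType (real closed field, so that the Euclidean norm
   |v| = Num.sqrt (sum v_a^2) exists). Vectors of R^N are column vectors 'cV[R]_N;
   elements X of R^N (x) R^{n x n}_s are families X : 'I_N -> 'M[R]_n of
   symmetric matrices (X a) i j = X_{a i j}. *)
From HB Require Import structures.
From mathcomp Require Import all_boot all_order all_algebra.
Set Implicit Arguments. Unset Strict Implicit. Unset Printing Implicit Defensive.
Import Order.TTheory GRing.Theory Num.Theory.
Local Open Scope ring_scope.

Section Defs.
Variable R : rcfType.

Definition vnorm N (v : 'cV[R]_N) : R := Num.sqrt (\sum_(a < N) v a 0 ^+ 2).

Definition in_sphere N (xi : 'cV[R]_N) : Prop := vnorm xi = 1.

Definition xiperp N (xi : 'cV[R]_N) : 'M[R]_N := 1%:M - xi *m xi^T.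

Definition xiT N (xi v : 'cV[R]_N) : R := (xi^T *m v) 0 0.

Definition vee N (a b : 'cV[R]_N) : 'M[R]_N := 2^-1 *: (a *m b^T + b *m a^T).

Definition nsd m (A : 'M[R]_m) : Prop := forall z : 'cV[R]_m, (z^T *m A *m z) 0 0 <= 0.

Definition sym_arr N n (X : 'I_N -> 'M[R]_n) : Prop := forall a, (X a)^T = X a.

Definition xiTX N n (xi : 'cV[R]_N) (X : 'I_N -> 'M[R]_n) : 'M[R]_n :=
  \sum_(a < N) xi a 0 *: X a.

Definition xiperpX N n (xi : 'cV[R]_N) (X : 'I_N -> 'M[R]_n) : 'I_N -> 'M[R]_n :=
  fun a => \sum_(b < N) xiperp xi a b *: X b.

Definition tens N n (xi : 'cV[R]_N) (A : 'M[R]_n) : 'I_N -> 'M[R]_n :=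
  fun a => xi a 0 *: A.

Definition veeT N n (xi : 'cV[R]_N) (X : 'I_N -> 'M[R]_n) :
    'I_N -> 'I_n -> 'I_N -> 'I_n -> R :=
  fun a i b j => 2^-1 * (xi a 0 * X b i j + xi b 0 * X a i j).

Definition tle0 N n (T : 'I_N -> 'I_n -> 'I_N -> 'I_n -> R) : Prop :=
  forall P : 'M[R]_(N, n),
    \sum_(a < N) \sum_(i < n) \sum_(b < N) \sum_(j < n)
      T a i b j * P a i * P b j <= 0.

Definition tle0_otimes N n (T : 'I_N -> 'I_n -> 'I_N -> 'I_n -> R) : Prop :=
  forall (eta : 'cV[R]_N) (w : 'cV[R]_n),
    \sum_(a < N) \sum_(i < n) \sum_(b < N) \sum_(j < n)
      T a i b j * eta a 0 * w i 0 * eta b 0 * w j 0 <= 0.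

End Defs.

(* Main.v *)
Require Import Defs.
From mathcomp Require Import all_boot all_order all_algebra.
From mathcomp Require Import ring lra.
Set Implicit Arguments. Unset Strict Implicit. Unset Printing Implicit Defensive.
Import Order.TTheory GRing.Theory Num.Theory.
Local Open Scope ring_scope.

Section H.
Variable R : rcfType.
Implicit Types (N n : nat).

Lemma dotE N (u v : 'cV[R]_N) : xiT u v = \sum_a u a 0 * v a 0.
Proof. rewrite /xiT !mxE; apply eq_bigr => a _; by rewrite mxE. Qed.

Lemma dotC N (u v : 'cV[R]_N) : xiT u v = xiT v u.
Proof. rewrite !dotE; apply eq_bigr => a _; by rewrite mulrC. Qed.

Lemma dotDr N (u v w : 'cV[R]_N) : xiT u (v + w) = xiT u v + xiT u w.
Proof. rewrite !dotE -big_split; apply eq_bigr => a _; by rewrite mxE mulrDr. Qed.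

Lemma dotZr N (u v : 'cV[R]_N) c : xiT u (c *: v) = c * xiT u v.
Proof. rewrite !dotE mulr_sumr; apply eq_bigr => a _; rewrite mxE; ring. Qed.

Lemma dotNr N (u v : 'cV[R]_N) : xiT u (- v) = - xiT u v.
Proof. by rewrite -scaleN1r dotZr mulN1r. Qed.

Lemma dotDl N (u v w : 'cV[R]_N) : xiT (v + w) u = xiT v u + xiT w u.
Proof. by rewrite dotC dotDr !(dotC u). Qed.

Lemma dotNl N (u v : 'cV[R]_N) : xiT (- v) u = - xiT v u.
Proof. by rewrite dotC dotNr dotC. Qed.

Lemma dotZl N (u v : 'cV[R]_N) c : xiT (c *: v) u = c * xiT v u.
Proof. by rewrite dotC dotZr dotC. Qed.

Lemma dot_ge0 N (u : 'cV[R]_N) : 0 <= xiT u u.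
Proof. rewrite dotE; apply: sumr_ge0 => a _; exact: mulr_ge0_le0 || by rewrite -expr2 sqr_ge0. Qed.

Lemma dot_eq0 N (u : 'cV[R]_N) : xiT u u = 0 -> u = 0.
Proof.
rewrite dotE => /eqP; rewrite psumr_eq0 => [/allP H|a _]; last by rewrite -expr2 sqr_ge0.
apply/matrixP => a j; rewrite (ord1 j) mxE.
have := H a (mem_index_enum _); rewrite /= mulf_eq0 orbb => /eqP //.
Qed.

Lemma lemA N (x u : 'cV[R]_N) : 0 < xiT x x ->
  (forall e, xiT e x * xiT e u <= 0) ->
  xiT x x *: u = xiT x u *: x /\ xiT x u <= 0.
Proof.
move=> s0 H.
set s := xiT x x; set a := xiT x u.
have a0 : a <= 0.
  have := H x; rewrite -/s -/a; by rewrite pmulr_rle0.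
split=> //.
set p := s *: u - a *: x.
have px : xiT p x = 0.
  by rewrite /p dotDl dotNl dotZl dotZl -/s (dotC u) -/a; ring.
set b := xiT p u.
have pp : xiT p p = s * b.
  by rewrite {2}/p dotDr dotNr !dotZr px -/b; ring.
have b0 : 0 <= b.
  by have := dot_ge0 p; rewrite pp pmulr_rge0.
have bz : b = 0.
  apply/eqP; rewrite eq_le b0 andbT; rewrite leNgt; apply/negP => bp.
  have := H (x + ((1 - a) / b) *: p).
  rewrite dotDl dotZl px mulr0 addr0 -/s dotDl dotZl -/a -/b.
  rewrite mulfVK ?gt_eqF // addrC subrK mulr1 leNgt s0 //.
apply/eqP; rewrite -subr_eq0; apply/eqP; apply: dot_eq0.
by rewrite -/p pp bz mulr0.
Qed.

Lemma quad_outer N (z a b : 'cV[R]_N) :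
  (z^T *m (a *m b^T) *m z) 0 0 = xiT z a * xiT b z.
Proof. by rewrite mulmxA -mulmxA mxE big_ord1. Qed.

Lemma quad_vee N (z a b : 'cV[R]_N) :
  (z^T *m vee a b *m z) 0 0 = xiT z a * xiT z b.
Proof.
rewrite /vee -scalemxAr -scalemxAl mulmxDr mulmxDl mxE [X in _ * X]mxE.
rewrite !quad_outer (dotC b) (dotC a).
rewrite (mulrC (xiT z b)) -mulr2n -(mulr_natl (xiT z a * xiT z b) 2).
by rewrite mulrA mulVf ?mul1r // pnatr_eq0.
Qed.

Lemma mul_col11 N (x : 'cV[R]_N) (M : 'M[R]_1) : x *m M = M 0 0 *: x.
Proof. apply/matrixP => i j; by rewrite (ord1 j) !mxE big_ord1 mulrC. Qed.

Lemma xiperpE N (xi v : 'cV[R]_N) : xiperp xi *m v = v - xiT xi v *: xi.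
Proof. by rewrite /xiperp mulmxBl mul1mx -mulmxA mul_col11. Qed.

Lemma sphere1 N (xi : 'cV[R]_N) : in_sphere xi -> xiT xi xi = 1.
Proof.
rewrite /in_sphere /vnorm dotE => H.
have -> : \sum_a xi a 0 * xi a 0 = \sum_a xi a 0 ^+ 2.
  by apply eq_bigr => a _; rewrite expr2.
rewrite -(sqr_sqrtr (a := \sum_a xi a 0 ^+ 2)) ?H ?expr1n //.
by apply: sumr_ge0 => a _; rewrite sqr_ge0.
Qed.

Lemma partI N (xi : 'cV[R]_N) : in_sphere xi ->
  forall v : 'cV[R]_N,
     (nsd (vee xi v) <-> (v = xiT xi v *: xi /\ xiT xi v <= 0)) /\
     ((v = xiT xi v *: xi /\ xiT xi v <= 0) <->
        (xiperp xi *m v = 0 /\ xiT xi v <= 0)) /\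
     ((xiperp xi *m v = 0 /\ xiT xi v <= 0) <-> v = - vnorm v *: xi).
Proof.
move=> /sphere1 s1 v.
split; [split|split; [split|split]].
- rewrite /nsd => H.
  have [] := @lemA _ xi v; first by rewrite s1 ltr01.
    by move=> e; rewrite -quad_vee.
  by rewrite s1 scale1r.
- case=> Hv Ha z; rewrite quad_vee Hv dotZr.
  rewrite mulrCA mulr_le0_ge0 // -expr2 sqr_ge0 //.
- by case=> Hv Ha; rewrite xiperpE {1}Hv subrr.
- by case=> /eqP; rewrite xiperpE subr_eq0 => /eqP.
- case=> /eqP; rewrite xiperpE subr_eq0 => /eqP Hv Ha.
  set c := xiT xi v in Hv Ha *.
  suff -> : vnorm v = - c by rewrite opprK.
  rewrite /vnorm.
  have -> : \sum_a v a 0 ^+ 2 = c ^+ 2.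
    rewrite -[c ^+ 2]mulr1 -s1 dotE mulr_sumr; apply eq_bigr => a _.
    by rewrite Hv mxE; ring.
  by rewrite sqrtr_sqr ler0_norm.
- set r := vnorm v => Hv.
  have r0 : 0 <= r by rewrite /r /vnorm sqrtr_ge0.
  have Hc : xiT xi v = - r by rewrite {1}Hv dotZr s1 mulr1.
  rewrite xiperpE Hc {1}Hv subrr; split=> //; by rewrite oppr_le0.
Qed.

Definition qf n (M : 'M[R]_n) (w : 'cV[R]_n) : R :=
  \sum_i \sum_j M i j * w i 0 * w j 0.

Lemma qf_lin2 n (f : 'I_n -> 'I_n -> R) (A B : 'M[R]_n) (w : 'cV[R]_n) c d :
  (forall i j, f i j = c * (A i j * w i 0 * w j 0) + d * (B i j * w i 0 * w j 0)) ->
  \sum_i \sum_j f i j = c * qf A w + d * qf B w.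
Proof.
move=> H; rewrite /qf !big_distrr -big_split; apply eq_bigr => i _ /=.
rewrite !big_distrr -big_split; apply eq_bigr => j _ /=; exact: H.
Qed.

Lemma quadE n (M : 'M[R]_n) (z : 'cV[R]_n) : (z^T *m M *m z) 0 0 = qf M z.
Proof.
rewrite mxE /qf exchange_big; apply eq_bigr => j _ /=.
rewrite mxE big_distrl; apply eq_bigr => i _ /=; rewrite !mxE; ring.
Qed.

Lemma sum_delta n (G : 'I_n -> R) i : \sum_l G l * (l == i)%:R = G i.
Proof.
rewrite (bigD1 i) //= eqxx mulr1 big1 ?addr0 // => l /negPf ->; by rewrite mulr0.
Qed.

Lemma sum_delta2 n (G : 'I_n -> R) i j :
  \sum_l G l * ((l == i)%:R + (l == j)%:R) = G i + G j.
Proof.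
rewrite -(sum_delta G i) -(sum_delta G j) -big_split; apply eq_bigr => l _ /=.
by rewrite mulrDr.
Qed.

Lemma lemB n (M : 'M[R]_n) : (forall i j, M i j = M j i) ->
  (forall w, qf M w = 0) -> forall i j, M i j = 0.
Proof.
move=> Hs Hq.
have E i j : qf M (\matrix_(k, _) ((k == i)%:R + (k == j)%:R)) = M i i + M i j + M j i + M j j.
  rewrite /qf.
  transitivity (\sum_k (M k i + M k j) * ((k == i)%:R + (k == j)%:R)).
    apply eq_bigr => k _.
    transitivity (\sum_l (M k l * ((k == i)%:R + (k == j)%:R)) * ((l == i)%:R + (l == j)%:R)).
      by apply eq_bigr => l _; rewrite !mxE.
    rewrite sum_delta2; ring.
  rewrite sum_delta2; ring.
have Hd i : M i i = 0.
  have := Hq (\matrix_(k, _) ((k == i)%:R + (k == i)%:R)); rewrite E => h; lra.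
move=> i j; have := Hq (\matrix_(k, _) ((k == i)%:R + (k == j)%:R)).
rewrite E Hd Hd (Hs j i) => h; lra.
Qed.

Lemma Qsum_eq N n (xi eta : 'cV[R]_N) (X : 'I_N -> 'M[R]_n) (w : 'cV[R]_n) :
  \sum_a \sum_i \sum_b \sum_j veeT xi X a i b j * eta a 0 * w i 0 * eta b 0 * w j 0
  = xiT eta xi * \sum_b eta b 0 * qf (X b) w.
Proof.
transitivity (\sum_a \sum_b ((2^-1 * eta a 0 * eta b 0 * xi a 0) * qf (X b) w
                  + (2^-1 * eta a 0 * eta b 0 * xi b 0) * qf (X a) w)).
  apply eq_bigr => a _; rewrite exchange_big; apply eq_bigr => b _ /=.
  apply: qf_lin2 => i j; rewrite /veeT; ring.
under eq_bigr do rewrite big_split.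
rewrite big_split /=.
have e2 : \sum_a \sum_b (2^-1 * eta a 0 * eta b 0 * xi b 0) * qf (X a) w
        = \sum_a \sum_b (2^-1 * eta a 0 * eta b 0 * xi a 0) * qf (X b) w.
  rewrite exchange_big; apply eq_bigr => a _; apply eq_bigr => b _; ring.
rewrite e2 dotE big_distrlr /=.
have -> : \sum_a \sum_b (2^-1 * eta a 0 * eta b 0 * xi a 0) * qf (X b) w
   = 2^-1 * \sum_a \sum_b eta a 0 * xi a 0 * (eta b 0 * qf (X b) w).
  rewrite big_distrr; apply eq_bigr => a _; rewrite big_distrr; apply eq_bigr => b _ /=; ring.
have h2 : (2^-1 + 2^-1 : R) = 1 by lra.
by rewrite -mulrDl h2 mul1r.
Qed.

Lemma xiTXE N n (xi : 'cV[R]_N) (X : 'I_N -> 'M[R]_n) i j :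
  xiTX xi X i j = \sum_a xi a 0 * X a i j.
Proof. rewrite /xiTX summxE; apply eq_bigr => a _; by rewrite mxE. Qed.

Lemma qf_sum N n (xi : 'cV[R]_N) (X : 'I_N -> 'M[R]_n) (w : 'cV[R]_n) :
  qf (xiTX xi X) w = \sum_a xi a 0 * qf (X a) w.
Proof.
transitivity (\sum_a \sum_i \sum_j xi a 0 * (X a i j * w i 0 * w j 0)); last first.
  apply eq_bigr => a _; rewrite /qf big_distrr; apply eq_bigr => i _.
  by rewrite big_distrr.
rewrite exchange_big; apply eq_bigr => i _ /=.
rewrite exchange_big; apply eq_bigr => j _ /=.
rewrite xiTXE !big_distrl; apply eq_bigr => a _ /=; ring.
Qed.

Lemma L4 N n (xi : 'cV[R]_N) (X : 'I_N -> 'M[R]_n) :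
  tle0 (veeT xi X) -> tle0_otimes (veeT xi X).
Proof.
move=> H eta w; have := H (\matrix_(a, i) (eta a 0 * w i 0)).
congr (_ <= _).
apply eq_bigr => a _; apply eq_bigr => i _; apply eq_bigr => b _; apply eq_bigr => j _.
rewrite !mxE; ring.
Qed.

Lemma L3 N n (xi : 'cV[R]_N) (X : 'I_N -> 'M[R]_n) (S : 'M[R]_n) :
  0 < xiT xi xi -> (forall b, xiT xi xi *: X b = xi b 0 *: S) -> nsd S ->
  tle0 (veeT xi X).
Proof.
set s := xiT xi xi => s0 HX HS P.
have He b i j : s * X b i j = xi b 0 * S i j.
  by have := congr1 (fun M : 'M[R]_n => M i j) (HX b); rewrite !mxE.
rewrite -(pmulr_rle0 _ s0).
set r : 'cV[R]_n := \matrix_(i, _) \sum_a xi a 0 * P a i.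
have h2 : (2^-1 + 2^-1 : R) = 1 by lra.
have E : s * (\sum_a \sum_i \sum_b \sum_j veeT xi X a i b j * P a i * P b j)
   = \sum_a \sum_i \sum_b \sum_j (xi a 0 * P a i) * S i j * (xi b 0 * P b j).
  rewrite big_distrr; apply eq_bigr => a _; rewrite big_distrr; apply eq_bigr => i _.
  rewrite big_distrr; apply eq_bigr => b _; rewrite big_distrr; apply eq_bigr => j _ /=.
  rewrite /veeT.
  transitivity (2^-1 * (xi a 0 * (s * X b i j) + xi b 0 * (s * X a i j)) * P a i * P b j); first ring.
  rewrite !He.
  transitivity ((2^-1 + 2^-1) * (xi a 0 * P a i * S i j * (xi b 0 * P b j))); first ring.
  by rewrite h2 mul1r.
have F : \sum_a \sum_i \sum_b \sum_j (xi a 0 * P a i) * S i j * (xi b 0 * P b j) = qf S r.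
  rewrite exchange_big /=; apply eq_bigr => i _.
  under eq_bigr do rewrite exchange_big.
  rewrite exchange_big /=; apply eq_bigr => j _.
  rewrite !mxE -mulrA big_distrlr big_distrr /=; apply eq_bigr => a _.
  rewrite big_distrr /=; apply eq_bigr => b _; ring.
by rewrite E F -quadE HS.
Qed.

Lemma L2 N n (xi : 'cV[R]_N) (X : 'I_N -> 'M[R]_n) :
  0 < xiT xi xi -> sym_arr X -> tle0_otimes (veeT xi X) ->
  (forall b, xiT xi xi *: X b = xi b 0 *: xiTX xi X) /\ nsd (xiTX xi X).
Proof.
set s := xiT xi xi => s0 Hsym Ho.
set S := xiTX xi X.
pose u (w : 'cV[R]_n) : 'cV[R]_N := \matrix_(b, _) qf (X b) w.
have Hw w : s *: u w = xiT xi (u w) *: xi /\ xiT xi (u w) <= 0.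
  apply: lemA => // e; have := Ho e w; rewrite Qsum_eq.
  suff -> : xiT e (u w) = \sum_b e b 0 * qf (X b) w by [].
  by rewrite dotE; apply eq_bigr => b _; rewrite mxE.
have qS w : xiT xi (u w) = qf S w.
  by rewrite qf_sum dotE; apply eq_bigr => b _; rewrite mxE.
split; last by move=> z; rewrite quadE -qS; case: (Hw z).
move=> b; apply/matrixP => i j; rewrite !mxE; apply/eqP; rewrite -subr_eq0; apply/eqP.
have := @lemB n (s *: X b - xi b 0 *: S) _ _ i j; rewrite !mxE; apply.
  move=> k l; rewrite !mxE !xiTXE.
  have Hkl a : X a k l = X a l k.
    by have := congr1 (fun M : 'M[R]_n => M k l) (Hsym a); rewrite !mxE.
  rewrite Hkl; congr (_ - _ * _); apply eq_bigr => a _; by rewrite Hkl.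
move=> w.
have := congr1 (fun M : 'cV[R]_N => M b 0) (Hw w).1; rewrite /= !mxE qS => e.
transitivity (s * qf (X b) w + (- xi b 0) * qf S w).
  apply: qf_lin2 => k l; rewrite !mxE; ring.
rewrite e; ring.
Qed.

Lemma xiperpXE N n (xi : 'cV[R]_N) (X : 'I_N -> 'M[R]_n) a :
  xiperpX xi X a = X a - xi a 0 *: xiTX xi X.
Proof.
apply/matrixP => i j; rewrite summxE !mxE xiTXE.
transitivity (\sum_b X b i j * (b == a)%:R - xi a 0 * \sum_b xi b 0 * X b i j);
  last by rewrite sum_delta.
rewrite mulr_sumr -sumrB; apply eq_bigr => b _; rewrite !mxE big_ord1 !mxE (eq_sym b a).
case: (a == b) => /=; ring.
Qed.
End H.

Require Import Stdlib.Logic.FunctionalExtensionality.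

Theorem proposition14 (R : rcfType) (N n : nat) (xi : 'cV[R]_N) :
  in_sphere xi ->
  (* (i) *)
  (forall v : 'cV[R]_N,
     (nsd (vee xi v) <-> (v = xiT xi v *: xi /\ xiT xi v <= 0)) /\
     ((v = xiT xi v *: xi /\ xiT xi v <= 0) <->
        (xiperp xi *m v = 0 /\ xiT xi v <= 0)) /\
     ((xiperp xi *m v = 0 /\ xiT xi v <= 0) <-> v = - vnorm v *: xi)) /\
  (* (ii) *)
  (forall X : 'I_N -> 'M[R]_n, sym_arr X ->
     (tle0_otimes (veeT xi X) <->
        (X = tens xi (xiTX xi X) /\ nsd (xiTX xi X))) /\
     ((X = tens xi (xiTX xi X) /\ nsd (xiTX xi X)) <->
        (xiperpX xi X = (fun _ => 0) /\ nsd (xiTX xi X))) /\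
     ((xiperpX xi X = (fun _ => 0) /\ nsd (xiTX xi X)) <->
        tle0 (veeT xi X))) /\
  (* in particular *)
  (forall (eta : 'cV[R]_N) (Y : 'I_N -> 'M[R]_n), sym_arr Y ->
     (tle0_otimes (veeT eta Y) <-> tle0 (veeT eta Y))).
Proof.
move=> Hs; have s1 := sphere1 Hs.
have s0 : 0 < xiT xi xi by rewrite s1 ltr01.
split; first exact: partI.
split.
  move=> X Hsym.
  set S := xiTX xi X.
  have e2 : (X = tens xi S /\ nsd S) <-> (xiperpX xi X = (fun _ => 0) /\ nsd S).
    split; case=> H Hn; split=> //.
      apply: functional_extensionality => a.
      by rewrite xiperpXE -/S {1}H /tens subrr.
    apply: functional_extensionality => a.
    have := congr1 (fun f => f a) H; rewrite xiperpXE /= => /eqP.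
    by rewrite subr_eq0 => /eqP.
  have e1 : tle0_otimes (veeT xi X) <-> (X = tens xi S /\ nsd S).
    split.
      move=> Ho; have [h1 h2] := L2 s0 Hsym Ho; split=> //.
      apply: functional_extensionality => b.
      by have := h1 b; rewrite s1 scale1r.
    case=> H Hn; apply: L4; apply: (L3 (S := S)) => // b.
    by rewrite s1 scale1r {1}H.
  split; first exact: e1.
  split; first exact: e2.
  split.
    move=> /e2 [H Hn]; apply: (L3 (S := S)) => // b.
    by rewrite s1 scale1r {1}H.
  by move=> /L4 /e1 /e2.
move=> eta Y Hsym; split; last exact: L4.
move=> Ho.
case: (eqVneq (xiT eta eta) 0) => [h|h].
  have -> := dot_eq0 h.
  move=> P; rewrite big1 // => a _; rewrite big1 // => i _; rewrite big1 // => b _.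
  rewrite big1 // => j _; rewrite /veeT !mxE; ring.
have e0 : 0 < xiT eta eta by rewrite lt_def h dot_ge0.
have [h1 h2] := L2 e0 Hsym Ho.
exact: L3 e0 h1 h2.
Qed.
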